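(* Let $\epsilon$ be real and, for $i=1,2,3$, let $\alpha_i,\beta_i,\eta_i$ be real constants with $\beta_i^2=e^{\alpha_i\epsilon}+e^{-\alpha_i\epsilon}-2$. Assume $P(p_i+p_j)\neq0$ for $i<j$ and set $A(i,j)=-\dfrac{P(p_i-p_j)}{P(p_i+p_j)}$. Then $$f(x,t)=1+\sum_{i=1}^3 e^{\theta_i}+\sum_{1\le i<j\le 3}A(i,j)e^{\theta_i+\theta_j}+A(1,2)A(1,3)A(2,3)\,e^{\theta_1+\theta_2+\theta_3},\qquad \theta_i=-\frac{\alpha_i}{x}+\beta_i t+\eta_i,$$ satisfies the bilinear generalized $q$-Toda equation $\big[D_t^2-\big(e^{\epsilon x^2D_x}+e^{-\epsilon x^2 D_x}-2\big)\big]f\cdot f=0$.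
   Context: Hirota operators: $P(D_x,D_t)\,f\cdot g := P(\partial_x-\partial_{x'},\partial_t-\partial_{t'})f(x,t)g(x',t')|_{x'=x,t'=t}$; $e^{\pm\epsilon x^2 D_x} f\cdot g$ means $f\!\left(\frac{x}{1\mp\epsilon x}\right)g\!\left(\frac{x}{1\pm\epsilon x}\right)$. For a vector $p=(\beta,\alpha,\eta)$ define $P(p)=\beta^2-\big(e^{\alpha\epsilon}+e^{-\alpha\epsilon}-2\big)$, and $p_i=(\beta_i,\alpha_i,\eta_i)$ with componentwise sums and differences. *)

(* Defs.v *)
From Stdlib Require Import Reals.
Open Scope R_scope.

Definition vec := (R * R * R)%type.
Definition vbeta (p : vec) : R := fst (fst p).
Definition valpha (p : vec) : R := snd (fst p).
Definition veta (p : vec) : R := snd p.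
Definition vadd (p q : vec) : vec :=
  (vbeta p + vbeta q, valpha p + valpha q, veta p + veta q).
Definition vsub (p q : vec) : vec :=
  (vbeta p - vbeta q, valpha p - valpha q, veta p - veta q).

Definition Ppoly (eps : R) (p : vec) : R :=
  (vbeta p)^2 - (exp (valpha p * eps) + exp (- (valpha p * eps)) - 2).

Definition Acoef (eps : R) (pi pj : vec) : R :=
  - (Ppoly eps (vsub pi pj) / Ppoly eps (vadd pi pj)).

Definition theta (p : vec) (x t : R) : R :=
  - (valpha p / x) + vbeta p * t + veta p.

Definition f3 (eps : R) (p1 p2 p3 : vec) (x t : R) : R :=
  1 + exp (theta p1 x t) + exp (theta p2 x t) + exp (theta p3 x t)
  + Acoef eps p1 p2 * exp (theta p1 x t + theta p2 x t)
  + Acoef eps p1 p3 * exp (theta p1 x t + theta p3 x t)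
  + Acoef eps p2 p3 * exp (theta p2 x t + theta p3 x t)
  + Acoef eps p1 p2 * Acoef eps p1 p3 * Acoef eps p2 p3
      * exp (theta p1 x t + theta p2 x t + theta p3 x t).

(* D_t^2 g.h at t, written out: g'' h - 2 g' h' + g h'' , given the
   t-derivatives g1,g2 of g and h1,h2 of h. *)
Definition hirota_Dt2 (g g1 g2 h h1 h2 : R -> R) (t : R) : R :=
  g2 t * h t - 2 * (g1 t * h1 t) + g t * h2 t.

(* e^{+eps x^2 D_x} g.h = g(x/(1-eps x)) h(x/(1+eps x)) *)
Definition qshift_plus (eps : R) (g h : R -> R -> R) (x t : R) : R :=
  g (x / (1 - eps * x)) t * h (x / (1 + eps * x)) t.
(* e^{-eps x^2 D_x} g.h = g(x/(1+eps x)) h(x/(1-eps x)) *)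
Definition qshift_minus (eps : R) (g h : R -> R -> R) (x t : R) : R :=
  g (x / (1 + eps * x)) t * h (x / (1 - eps * x)) t.

(* Bilinear generalized q-Toda:
   [D_t^2 - (e^{eps x^2 D_x} + e^{-eps x^2 D_x} - 2)] f.f at (x,t),
   where ft, ftt are the first and second t-derivatives of f(x, .). *)
Definition qToda_bilinear (eps : R) (f : R -> R -> R) (ft ftt : R -> R)
    (x t : R) : R :=
  hirota_Dt2 (f x) ft ftt (f x) ft ftt t
  - (qshift_plus eps f f x t + qshift_minus eps f f x t - 2 * (f x t * f x t)).

(* Main.v *)
Require Import Defs.
From Stdlib Require Import Reals Lra Field FunctionalExtensionality.
From Coquelicot Require Import Coquelicot.
Open Scope R_scope.

Definition PP (b u : R) := b^2 - (u + /u - 2).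
Definition AA (b1 u1 b2 u2 : R) := - (PP (b1-b2) (u1/u2) / PP (b1+b2) (u1*u2)).
Definition FF (b1 b2 b3 u1 u2 u3 E1 E2 E3 : R) :=
  1 + E1 + E2 + E3 + AA b1 u1 b2 u2*(E1*E2) + AA b1 u1 b3 u3*(E1*E3)
  + AA b2 u2 b3 u3*(E2*E3)
  + AA b1 u1 b2 u2*AA b1 u1 b3 u3*AA b2 u2 b3 u3*(E1*E2*E3).
Definition FT (b1 b2 b3 u1 u2 u3 E1 E2 E3 : R) :=
  b1*E1 + b2*E2 + b3*E3 + AA b1 u1 b2 u2*(b1+b2)*(E1*E2)
  + AA b1 u1 b3 u3*(b1+b3)*(E1*E3) + AA b2 u2 b3 u3*(b2+b3)*(E2*E3)
  + AA b1 u1 b2 u2*AA b1 u1 b3 u3*AA b2 u2 b3 u3*(b1+b2+b3)*(E1*E2*E3).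
Definition FTT (b1 b2 b3 u1 u2 u3 E1 E2 E3 : R) :=
  b1^2*E1 + b2^2*E2 + b3^2*E3 + AA b1 u1 b2 u2*(b1+b2)^2*(E1*E2)
  + AA b1 u1 b3 u3*(b1+b3)^2*(E1*E3) + AA b2 u2 b3 u3*(b2+b3)^2*(E2*E3)
  + AA b1 u1 b2 u2*AA b1 u1 b3 u3*AA b2 u2 b3 u3*(b1+b2+b3)^2*(E1*E2*E3).

Definition K000 (b1 b2 b3 u1 u2 u3 v1 v2 v3 c12 c13 c23 : R) : R :=
  1*1*((0-0)^2-(1*1+1*1-2)).
Definition K001 (b1 b2 b3 u1 u2 u3 v1 v2 v3 c12 c13 c23 : R) : R :=
  1*1*((0-(b3))^2-(1*(v3)+1*(u3)-2)) + 1*1*(((b3)-0)^2-((u3)*1+(v3)*1-2)).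
Definition K002 (b1 b2 b3 u1 u2 u3 v1 v2 v3 c12 c13 c23 : R) : R :=
  1*1*(((b3)-(b3))^2-((u3)*(v3)+(v3)*(u3)-2)).
Definition K010 (b1 b2 b3 u1 u2 u3 v1 v2 v3 c12 c13 c23 : R) : R :=
  1*1*((0-(b2))^2-(1*(v2)+1*(u2)-2)) + 1*1*(((b2)-0)^2-((u2)*1+(v2)*1-2)).
Definition K011 (b1 b2 b3 u1 u2 u3 v1 v2 v3 c12 c13 c23 : R) : R :=
  1*c23*((0-(b2+b3))^2-(1*(v2*v3)+1*(u2*u3)-2)) + 1*1*(((b2)-(b3))^2-((u2)*(v3)+(v2)*(u3)-2)) + 1*1*(((b3)-(b2))^2-((u3)*(v2)+(v3)*(u2)-2)) + c23*1*(((b2+b3)-0)^2-((u2*u3)*1+(v2*v3)*1-2)).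
Definition K012 (b1 b2 b3 u1 u2 u3 v1 v2 v3 c12 c13 c23 : R) : R :=
  1*c23*(((b3)-(b2+b3))^2-((u3)*(v2*v3)+(v3)*(u2*u3)-2)) + c23*1*(((b2+b3)-(b3))^2-((u2*u3)*(v3)+(v2*v3)*(u3)-2)).
Definition K020 (b1 b2 b3 u1 u2 u3 v1 v2 v3 c12 c13 c23 : R) : R :=
  1*1*(((b2)-(b2))^2-((u2)*(v2)+(v2)*(u2)-2)).
Definition K021 (b1 b2 b3 u1 u2 u3 v1 v2 v3 c12 c13 c23 : R) : R :=
  1*c23*(((b2)-(b2+b3))^2-((u2)*(v2*v3)+(v2)*(u2*u3)-2)) + c23*1*(((b2+b3)-(b2))^2-((u2*u3)*(v2)+(v2*v3)*(u2)-2)).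
Definition K022 (b1 b2 b3 u1 u2 u3 v1 v2 v3 c12 c13 c23 : R) : R :=
  c23*c23*(((b2+b3)-(b2+b3))^2-((u2*u3)*(v2*v3)+(v2*v3)*(u2*u3)-2)).
Definition K100 (b1 b2 b3 u1 u2 u3 v1 v2 v3 c12 c13 c23 : R) : R :=
  1*1*((0-(b1))^2-(1*(v1)+1*(u1)-2)) + 1*1*(((b1)-0)^2-((u1)*1+(v1)*1-2)).
Definition K101 (b1 b2 b3 u1 u2 u3 v1 v2 v3 c12 c13 c23 : R) : R :=
  1*c13*((0-(b1+b3))^2-(1*(v1*v3)+1*(u1*u3)-2)) + 1*1*(((b1)-(b3))^2-((u1)*(v3)+(v1)*(u3)-2)) + 1*1*(((b3)-(b1))^2-((u3)*(v1)+(v3)*(u1)-2)) + c13*1*(((b1+b3)-0)^2-((u1*u3)*1+(v1*v3)*1-2)).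
Definition K102 (b1 b2 b3 u1 u2 u3 v1 v2 v3 c12 c13 c23 : R) : R :=
  1*c13*(((b3)-(b1+b3))^2-((u3)*(v1*v3)+(v3)*(u1*u3)-2)) + c13*1*(((b1+b3)-(b3))^2-((u1*u3)*(v3)+(v1*v3)*(u3)-2)).
Definition K110 (b1 b2 b3 u1 u2 u3 v1 v2 v3 c12 c13 c23 : R) : R :=
  1*c12*((0-(b1+b2))^2-(1*(v1*v2)+1*(u1*u2)-2)) + 1*1*(((b1)-(b2))^2-((u1)*(v2)+(v1)*(u2)-2)) + 1*1*(((b2)-(b1))^2-((u2)*(v1)+(v2)*(u1)-2)) + c12*1*(((b1+b2)-0)^2-((u1*u2)*1+(v1*v2)*1-2)).
Definition K111 (b1 b2 b3 u1 u2 u3 v1 v2 v3 c12 c13 c23 : R) : R :=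
  1*(c12*c13*c23)*((0-(b1+b2+b3))^2-(1*(v1*v2*v3)+1*(u1*u2*u3)-2)) + 1*c23*(((b1)-(b2+b3))^2-((u1)*(v2*v3)+(v1)*(u2*u3)-2)) + 1*c13*(((b2)-(b1+b3))^2-((u2)*(v1*v3)+(v2)*(u1*u3)-2)) + c12*1*(((b1+b2)-(b3))^2-((u1*u2)*(v3)+(v1*v2)*(u3)-2)) + 1*c12*(((b3)-(b1+b2))^2-((u3)*(v1*v2)+(v3)*(u1*u2)-2)) + c13*1*(((b1+b3)-(b2))^2-((u1*u3)*(v2)+(v1*v3)*(u2)-2)) + c23*1*(((b2+b3)-(b1))^2-((u2*u3)*(v1)+(v2*v3)*(u1)-2)) + (c12*c13*c23)*1*(((b1+b2+b3)-0)^2-((u1*u2*u3)*1+(v1*v2*v3)*1-2)).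
Definition K112 (b1 b2 b3 u1 u2 u3 v1 v2 v3 c12 c13 c23 : R) : R :=
  1*(c12*c13*c23)*(((b3)-(b1+b2+b3))^2-((u3)*(v1*v2*v3)+(v3)*(u1*u2*u3)-2)) + c13*c23*(((b1+b3)-(b2+b3))^2-((u1*u3)*(v2*v3)+(v1*v3)*(u2*u3)-2)) + c23*c13*(((b2+b3)-(b1+b3))^2-((u2*u3)*(v1*v3)+(v2*v3)*(u1*u3)-2)) + (c12*c13*c23)*1*(((b1+b2+b3)-(b3))^2-((u1*u2*u3)*(v3)+(v1*v2*v3)*(u3)-2)).
Definition K120 (b1 b2 b3 u1 u2 u3 v1 v2 v3 c12 c13 c23 : R) : R :=
  1*c12*(((b2)-(b1+b2))^2-((u2)*(v1*v2)+(v2)*(u1*u2)-2)) + c12*1*(((b1+b2)-(b2))^2-((u1*u2)*(v2)+(v1*v2)*(u2)-2)).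
Definition K121 (b1 b2 b3 u1 u2 u3 v1 v2 v3 c12 c13 c23 : R) : R :=
  1*(c12*c13*c23)*(((b2)-(b1+b2+b3))^2-((u2)*(v1*v2*v3)+(v2)*(u1*u2*u3)-2)) + c12*c23*(((b1+b2)-(b2+b3))^2-((u1*u2)*(v2*v3)+(v1*v2)*(u2*u3)-2)) + c23*c12*(((b2+b3)-(b1+b2))^2-((u2*u3)*(v1*v2)+(v2*v3)*(u1*u2)-2)) + (c12*c13*c23)*1*(((b1+b2+b3)-(b2))^2-((u1*u2*u3)*(v2)+(v1*v2*v3)*(u2)-2)).
Definition K122 (b1 b2 b3 u1 u2 u3 v1 v2 v3 c12 c13 c23 : R) : R :=
  c23*(c12*c13*c23)*(((b2+b3)-(b1+b2+b3))^2-((u2*u3)*(v1*v2*v3)+(v2*v3)*(u1*u2*u3)-2)) + (c12*c13*c23)*c23*(((b1+b2+b3)-(b2+b3))^2-((u1*u2*u3)*(v2*v3)+(v1*v2*v3)*(u2*u3)-2)).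
Definition K200 (b1 b2 b3 u1 u2 u3 v1 v2 v3 c12 c13 c23 : R) : R :=
  1*1*(((b1)-(b1))^2-((u1)*(v1)+(v1)*(u1)-2)).
Definition K201 (b1 b2 b3 u1 u2 u3 v1 v2 v3 c12 c13 c23 : R) : R :=
  1*c13*(((b1)-(b1+b3))^2-((u1)*(v1*v3)+(v1)*(u1*u3)-2)) + c13*1*(((b1+b3)-(b1))^2-((u1*u3)*(v1)+(v1*v3)*(u1)-2)).
Definition K202 (b1 b2 b3 u1 u2 u3 v1 v2 v3 c12 c13 c23 : R) : R :=
  c13*c13*(((b1+b3)-(b1+b3))^2-((u1*u3)*(v1*v3)+(v1*v3)*(u1*u3)-2)).
Definition K210 (b1 b2 b3 u1 u2 u3 v1 v2 v3 c12 c13 c23 : R) : R :=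
  1*c12*(((b1)-(b1+b2))^2-((u1)*(v1*v2)+(v1)*(u1*u2)-2)) + c12*1*(((b1+b2)-(b1))^2-((u1*u2)*(v1)+(v1*v2)*(u1)-2)).
Definition K211 (b1 b2 b3 u1 u2 u3 v1 v2 v3 c12 c13 c23 : R) : R :=
  1*(c12*c13*c23)*(((b1)-(b1+b2+b3))^2-((u1)*(v1*v2*v3)+(v1)*(u1*u2*u3)-2)) + c12*c13*(((b1+b2)-(b1+b3))^2-((u1*u2)*(v1*v3)+(v1*v2)*(u1*u3)-2)) + c13*c12*(((b1+b3)-(b1+b2))^2-((u1*u3)*(v1*v2)+(v1*v3)*(u1*u2)-2)) + (c12*c13*c23)*1*(((b1+b2+b3)-(b1))^2-((u1*u2*u3)*(v1)+(v1*v2*v3)*(u1)-2)).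
Definition K212 (b1 b2 b3 u1 u2 u3 v1 v2 v3 c12 c13 c23 : R) : R :=
  c13*(c12*c13*c23)*(((b1+b3)-(b1+b2+b3))^2-((u1*u3)*(v1*v2*v3)+(v1*v3)*(u1*u2*u3)-2)) + (c12*c13*c23)*c13*(((b1+b2+b3)-(b1+b3))^2-((u1*u2*u3)*(v1*v3)+(v1*v2*v3)*(u1*u3)-2)).
Definition K220 (b1 b2 b3 u1 u2 u3 v1 v2 v3 c12 c13 c23 : R) : R :=
  c12*c12*(((b1+b2)-(b1+b2))^2-((u1*u2)*(v1*v2)+(v1*v2)*(u1*u2)-2)).
Definition K221 (b1 b2 b3 u1 u2 u3 v1 v2 v3 c12 c13 c23 : R) : R :=
  c12*(c12*c13*c23)*(((b1+b2)-(b1+b2+b3))^2-((u1*u2)*(v1*v2*v3)+(v1*v2)*(u1*u2*u3)-2)) + (c12*c13*c23)*c12*(((b1+b2+b3)-(b1+b2))^2-((u1*u2*u3)*(v1*v2)+(v1*v2*v3)*(u1*u2)-2)).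
Definition K222 (b1 b2 b3 u1 u2 u3 v1 v2 v3 c12 c13 c23 : R) : R :=
  (c12*c13*c23)*(c12*c13*c23)*(((b1+b2+b3)-(b1+b2+b3))^2-((u1*u2*u3)*(v1*v2*v3)+(v1*v2*v3)*(u1*u2*u3)-2)).

Definition KSUM (b1 b2 b3 u1 u2 u3 v1 v2 v3 c12 c13 c23 E1 E2 E3 : R) : R :=
  K000 b1 b2 b3 u1 u2 u3 v1 v2 v3 c12 c13 c23 * (1) + K001 b1 b2 b3 u1 u2 u3 v1 v2 v3 c12 c13 c23 * (E3) + K002 b1 b2 b3 u1 u2 u3 v1 v2 v3 c12 c13 c23 * (E3*E3) + K010 b1 b2 b3 u1 u2 u3 v1 v2 v3 c12 c13 c23 * (E2) + K011 b1 b2 b3 u1 u2 u3 v1 v2 v3 c12 c13 c23 * (E2*E3) + K012 b1 b2 b3 u1 u2 u3 v1 v2 v3 c12 c13 c23 * (E2*E3*E3) + K020 b1 b2 b3 u1 u2 u3 v1 v2 v3 c12 c13 c23 * (E2*E2) + K021 b1 b2 b3 u1 u2 u3 v1 v2 v3 c12 c13 c23 * (E2*E2*E3) + K022 b1 b2 b3 u1 u2 u3 v1 v2 v3 c12 c13 c23 * (E2*E2*E3*E3) + K100 b1 b2 b3 u1 u2 u3 v1 v2 v3 c12 c13 c23 * (E1) + K101 b1 b2 b3 u1 u2 u3 v1 v2 v3 c12 c13 c23 * (E1*E3) + K102 b1 b2 b3 u1 u2 u3 v1 v2 v3 c12 c13 c23 * (E1*E3*E3) + K110 b1 b2 b3 u1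 u2 u3 v1 v2 v3 c12 c13 c23 * (E1*E2) + K111 b1 b2 b3 u1 u2 u3 v1 v2 v3 c12 c13 c23 * (E1*E2*E3) + K112 b1 b2 b3 u1 u2 u3 v1 v2 v3 c12 c13 c23 * (E1*E2*E3*E3) + K120 b1 b2 b3 u1 u2 u3 v1 v2 v3 c12 c13 c23 * (E1*E2*E2) + K121 b1 b2 b3 u1 u2 u3 v1 v2 v3 c12 c13 c23 * (E1*E2*E2*E3) + K122 b1 b2 b3 u1 u2 u3 v1 v2 v3 c12 c13 c23 * (E1*E2*E2*E3*E3) + K200 b1 b2 b3 u1 u2 u3 v1 v2 v3 c12 c13 c23 * (E1*E1) + K201 b1 b2 b3 u1 u2 u3 v1 v2 v3 c12 c13 c23 * (E1*E1*E3) + K202 b1 b2 b3 u1 u2 u3 v1 v2 v3 c12 c13 c23 * (E1*E1*E3*E3) + K210 b1 b2 b3 u1 u2 u3 v1 v2 v3 c12 c13 c23 * (E1*E1*E2) + K211 b1 b2 b3 u1 u2 u3 v1 v2 v3 c12 c13 c23 * (E1*E1*E2*E3) + K212 b1 b2 b3 u1 u2 u3 v1 v2 v3 c12 c13 c23 * (E1*E1*E2*E3*E3) + K220 b1 b2 b3 u1 u2 u3 v1 v2 v3 c12 c13 c23 * (E1*E1*E2*E2) + K221 b1 b2 b3 u1 u2 u3 v1 v2 v3 c12 c13 c23 * (E1*E1*E2*E2*E3) + K222 b1 b2 b3 u1 u2 u3 v1 v2 v3 c12 c13 c23 * (E1*E1*E2*E2*E3*E3).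

Definition FFg (c12 c13 c23 E1 E2 E3 : R) :=
  1 + E1 + E2 + E3 + c12*(E1*E2) + c13*(E1*E3)
  + c23*(E2*E3)
  + c12*c13*c23*(E1*E2*E3).
Definition FTg (b1 b2 b3 c12 c13 c23 E1 E2 E3 : R) :=
  b1*E1 + b2*E2 + b3*E3 + c12*(b1+b2)*(E1*E2)
  + c13*(b1+b3)*(E1*E3) + c23*(b2+b3)*(E2*E3)
  + c12*c13*c23*(b1+b2+b3)*(E1*E2*E3).
Definition FTTg (b1 b2 b3 c12 c13 c23 E1 E2 E3 : R) :=
  b1^2*E1 + b2^2*E2 + b3^2*E3 + c12*(b1+b2)^2*(E1*E2)
  + c13*(b1+b3)^2*(E1*E3) + c23*(b2+b3)^2*(E2*E3)
  + c12*c13*c23*(b1+b2+b3)^2*(E1*E2*E3).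

Lemma G1 (b1 b2 b3 u1 u2 u3 v1 v2 v3 c12 c13 c23 E1 E2 E3 : R) :
  FTTg b1 b2 b3 c12 c13 c23 E1 E2 E3 * FFg c12 c13 c23 E1 E2 E3
  - 2 * (FTg b1 b2 b3 c12 c13 c23 E1 E2 E3 * FTg b1 b2 b3 c12 c13 c23 E1 E2 E3)
  + FFg c12 c13 c23 E1 E2 E3 * FTTg b1 b2 b3 c12 c13 c23 E1 E2 E3
  - (FFg c12 c13 c23 (E1*u1) (E2*u2) (E3*u3) * FFg c12 c13 c23 (E1*v1) (E2*v2) (E3*v3)
     + FFg c12 c13 c23 (E1*v1) (E2*v2) (E3*v3) * FFg c12 c13 c23 (E1*u1) (E2*u2) (E3*u3)
     - 2 * (FFg c12 c13 c23 E1 E2 E3 * FFg c12 c13 c23 E1 E2 E3))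
  = KSUM b1 b2 b3 u1 u2 u3 v1 v2 v3 c12 c13 c23 E1 E2 E3.
Proof. unfold FTTg, FFg, FTg, KSUM, K000, K001, K002, K010, K011, K012, K020, K021, K022, K100, K101, K102, K110, K111, K112, K120, K121, K122, K200, K201, K202, K210, K211, K212, K220, K221, K222. ring. Qed.

Ltac nz := match goal with |- ?G0 <> 0 => let H := fresh in intro H; match goal with N : PP (?a - /?a + (?b - /?b)) _ <> 0 |- _ => apply N; apply (Rmult_eq_reg_l ((a*b)^2)); [rewrite Rmult_0_r; apply eq_trans with G0; [unfold PP; field; auto | exact H] | apply pow_nonzero; apply Rmult_integral_contrapositive; auto] end end.

Lemma zK000 (w1 w2 w3 : R) (H1 : w1 <> 0) (H2 : w2 <> 0) (H3 : w3 <> 0)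
  (N12 : PP ((w1 - /w1)+(w2 - /w2)) ((w1*w1)*(w2*w2)) <> 0)
  (N13 : PP ((w1 - /w1)+(w3 - /w3)) ((w1*w1)*(w3*w3)) <> 0)
  (N23 : PP ((w2 - /w2)+(w3 - /w3)) ((w2*w2)*(w3*w3)) <> 0) :
  K000 (w1 - /w1) (w2 - /w2) (w3 - /w3) (w1*w1) (w2*w2) (w3*w3) (/(w1*w1)) (/(w2*w2)) (/(w3*w3)) (AA (w1 - /w1) (w1*w1) (w2 - /w2) (w2*w2)) (AA (w1 - /w1) (w1*w1) (w3 - /w3) (w3*w3)) (AA (w2 - /w2) (w2*w2) (w3 - /w3) (w3*w3)) = 0.
Proof. unfold K000, AA. unfold PP. field; repeat split; auto; try nz. Qed.

Lemma zK001 (w1 w2 w3 : R) (H1 : w1 <> 0) (H2 : w2 <> 0) (H3 : w3 <> 0)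
  (N12 : PP ((w1 - /w1)+(w2 - /w2)) ((w1*w1)*(w2*w2)) <> 0)
  (N13 : PP ((w1 - /w1)+(w3 - /w3)) ((w1*w1)*(w3*w3)) <> 0)
  (N23 : PP ((w2 - /w2)+(w3 - /w3)) ((w2*w2)*(w3*w3)) <> 0) :
  K001 (w1 - /w1) (w2 - /w2) (w3 - /w3) (w1*w1) (w2*w2) (w3*w3) (/(w1*w1)) (/(w2*w2)) (/(w3*w3)) (AA (w1 - /w1) (w1*w1) (w2 - /w2) (w2*w2)) (AA (w1 - /w1) (w1*w1) (w3 - /w3) (w3*w3)) (AA (w2 - /w2) (w2*w2) (w3 - /w3) (w3*w3)) = 0.
Proof. unfold K001, AA. unfold PP. field; repeat split; auto; try nz. Qed.

Lemma zK002 (w1 w2 w3 : R) (H1 : w1 <> 0) (H2 : w2 <> 0) (H3 : w3 <> 0)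
  (N12 : PP ((w1 - /w1)+(w2 - /w2)) ((w1*w1)*(w2*w2)) <> 0)
  (N13 : PP ((w1 - /w1)+(w3 - /w3)) ((w1*w1)*(w3*w3)) <> 0)
  (N23 : PP ((w2 - /w2)+(w3 - /w3)) ((w2*w2)*(w3*w3)) <> 0) :
  K002 (w1 - /w1) (w2 - /w2) (w3 - /w3) (w1*w1) (w2*w2) (w3*w3) (/(w1*w1)) (/(w2*w2)) (/(w3*w3)) (AA (w1 - /w1) (w1*w1) (w2 - /w2) (w2*w2)) (AA (w1 - /w1) (w1*w1) (w3 - /w3) (w3*w3)) (AA (w2 - /w2) (w2*w2) (w3 - /w3) (w3*w3)) = 0.
Proof. unfold K002, AA. unfold PP. field; repeat split; auto; try nz. Qed.

Lemma zK010 (w1 w2 w3 : R) (H1 : w1 <> 0) (H2 : w2 <> 0) (H3 : w3 <> 0)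
  (N12 : PP ((w1 - /w1)+(w2 - /w2)) ((w1*w1)*(w2*w2)) <> 0)
  (N13 : PP ((w1 - /w1)+(w3 - /w3)) ((w1*w1)*(w3*w3)) <> 0)
  (N23 : PP ((w2 - /w2)+(w3 - /w3)) ((w2*w2)*(w3*w3)) <> 0) :
  K010 (w1 - /w1) (w2 - /w2) (w3 - /w3) (w1*w1) (w2*w2) (w3*w3) (/(w1*w1)) (/(w2*w2)) (/(w3*w3)) (AA (w1 - /w1) (w1*w1) (w2 - /w2) (w2*w2)) (AA (w1 - /w1) (w1*w1) (w3 - /w3) (w3*w3)) (AA (w2 - /w2) (w2*w2) (w3 - /w3) (w3*w3)) = 0.
Proof. unfold K010, AA. unfold PP. field; repeat split; auto; try nz. Qed.

Lemma zK011 (w1 w2 w3 : R) (H1 : w1 <> 0) (H2 : w2 <> 0) (H3 : w3 <> 0)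
  (N12 : PP ((w1 - /w1)+(w2 - /w2)) ((w1*w1)*(w2*w2)) <> 0)
  (N13 : PP ((w1 - /w1)+(w3 - /w3)) ((w1*w1)*(w3*w3)) <> 0)
  (N23 : PP ((w2 - /w2)+(w3 - /w3)) ((w2*w2)*(w3*w3)) <> 0) :
  K011 (w1 - /w1) (w2 - /w2) (w3 - /w3) (w1*w1) (w2*w2) (w3*w3) (/(w1*w1)) (/(w2*w2)) (/(w3*w3)) (AA (w1 - /w1) (w1*w1) (w2 - /w2) (w2*w2)) (AA (w1 - /w1) (w1*w1) (w3 - /w3) (w3*w3)) (AA (w2 - /w2) (w2*w2) (w3 - /w3) (w3*w3)) = 0.
Proof. unfold K011, AA. unfold PP. field; repeat split; auto; try nz. Qed.

Lemma zK012 (w1 w2 w3 : R) (H1 : w1 <> 0) (H2 : w2 <> 0) (H3 : w3 <> 0)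
  (N12 : PP ((w1 - /w1)+(w2 - /w2)) ((w1*w1)*(w2*w2)) <> 0)
  (N13 : PP ((w1 - /w1)+(w3 - /w3)) ((w1*w1)*(w3*w3)) <> 0)
  (N23 : PP ((w2 - /w2)+(w3 - /w3)) ((w2*w2)*(w3*w3)) <> 0) :
  K012 (w1 - /w1) (w2 - /w2) (w3 - /w3) (w1*w1) (w2*w2) (w3*w3) (/(w1*w1)) (/(w2*w2)) (/(w3*w3)) (AA (w1 - /w1) (w1*w1) (w2 - /w2) (w2*w2)) (AA (w1 - /w1) (w1*w1) (w3 - /w3) (w3*w3)) (AA (w2 - /w2) (w2*w2) (w3 - /w3) (w3*w3)) = 0.
Proof. unfold K012, AA. unfold PP. field; repeat split; auto; try nz. Qed.

Lemma zK020 (w1 w2 w3 : R) (H1 : w1 <> 0) (H2 : w2 <> 0) (H3 : w3 <> 0)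
  (N12 : PP ((w1 - /w1)+(w2 - /w2)) ((w1*w1)*(w2*w2)) <> 0)
  (N13 : PP ((w1 - /w1)+(w3 - /w3)) ((w1*w1)*(w3*w3)) <> 0)
  (N23 : PP ((w2 - /w2)+(w3 - /w3)) ((w2*w2)*(w3*w3)) <> 0) :
  K020 (w1 - /w1) (w2 - /w2) (w3 - /w3) (w1*w1) (w2*w2) (w3*w3) (/(w1*w1)) (/(w2*w2)) (/(w3*w3)) (AA (w1 - /w1) (w1*w1) (w2 - /w2) (w2*w2)) (AA (w1 - /w1) (w1*w1) (w3 - /w3) (w3*w3)) (AA (w2 - /w2) (w2*w2) (w3 - /w3) (w3*w3)) = 0.
Proof. unfold K020, AA. unfold PP. field; repeat split; auto; try nz. Qed.

Lemma zK021 (w1 w2 w3 : R) (H1 : w1 <> 0) (H2 : w2 <> 0) (H3 : w3 <> 0)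
  (N12 : PP ((w1 - /w1)+(w2 - /w2)) ((w1*w1)*(w2*w2)) <> 0)
  (N13 : PP ((w1 - /w1)+(w3 - /w3)) ((w1*w1)*(w3*w3)) <> 0)
  (N23 : PP ((w2 - /w2)+(w3 - /w3)) ((w2*w2)*(w3*w3)) <> 0) :
  K021 (w1 - /w1) (w2 - /w2) (w3 - /w3) (w1*w1) (w2*w2) (w3*w3) (/(w1*w1)) (/(w2*w2)) (/(w3*w3)) (AA (w1 - /w1) (w1*w1) (w2 - /w2) (w2*w2)) (AA (w1 - /w1) (w1*w1) (w3 - /w3) (w3*w3)) (AA (w2 - /w2) (w2*w2) (w3 - /w3) (w3*w3)) = 0.
Proof. unfold K021, AA. unfold PP. field; repeat split; auto; try nz. Qed.

Lemma zK022 (w1 w2 w3 : R) (H1 : w1 <> 0) (H2 : w2 <> 0) (H3 : w3 <> 0)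
  (N12 : PP ((w1 - /w1)+(w2 - /w2)) ((w1*w1)*(w2*w2)) <> 0)
  (N13 : PP ((w1 - /w1)+(w3 - /w3)) ((w1*w1)*(w3*w3)) <> 0)
  (N23 : PP ((w2 - /w2)+(w3 - /w3)) ((w2*w2)*(w3*w3)) <> 0) :
  K022 (w1 - /w1) (w2 - /w2) (w3 - /w3) (w1*w1) (w2*w2) (w3*w3) (/(w1*w1)) (/(w2*w2)) (/(w3*w3)) (AA (w1 - /w1) (w1*w1) (w2 - /w2) (w2*w2)) (AA (w1 - /w1) (w1*w1) (w3 - /w3) (w3*w3)) (AA (w2 - /w2) (w2*w2) (w3 - /w3) (w3*w3)) = 0.
Proof. unfold K022, AA. unfold PP. field; repeat split; auto; try nz. Qed.

Lemma zK100 (w1 w2 w3 : R) (H1 : w1 <> 0) (H2 : w2 <> 0) (H3 : w3 <> 0)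
  (N12 : PP ((w1 - /w1)+(w2 - /w2)) ((w1*w1)*(w2*w2)) <> 0)
  (N13 : PP ((w1 - /w1)+(w3 - /w3)) ((w1*w1)*(w3*w3)) <> 0)
  (N23 : PP ((w2 - /w2)+(w3 - /w3)) ((w2*w2)*(w3*w3)) <> 0) :
  K100 (w1 - /w1) (w2 - /w2) (w3 - /w3) (w1*w1) (w2*w2) (w3*w3) (/(w1*w1)) (/(w2*w2)) (/(w3*w3)) (AA (w1 - /w1) (w1*w1) (w2 - /w2) (w2*w2)) (AA (w1 - /w1) (w1*w1) (w3 - /w3) (w3*w3)) (AA (w2 - /w2) (w2*w2) (w3 - /w3) (w3*w3)) = 0.
Proof. unfold K100, AA. unfold PP. field; repeat split; auto; try nz. Qed.

Lemma zK101 (w1 w2 w3 : R) (H1 : w1 <> 0) (H2 : w2 <> 0) (H3 : w3 <> 0)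
  (N12 : PP ((w1 - /w1)+(w2 - /w2)) ((w1*w1)*(w2*w2)) <> 0)
  (N13 : PP ((w1 - /w1)+(w3 - /w3)) ((w1*w1)*(w3*w3)) <> 0)
  (N23 : PP ((w2 - /w2)+(w3 - /w3)) ((w2*w2)*(w3*w3)) <> 0) :
  K101 (w1 - /w1) (w2 - /w2) (w3 - /w3) (w1*w1) (w2*w2) (w3*w3) (/(w1*w1)) (/(w2*w2)) (/(w3*w3)) (AA (w1 - /w1) (w1*w1) (w2 - /w2) (w2*w2)) (AA (w1 - /w1) (w1*w1) (w3 - /w3) (w3*w3)) (AA (w2 - /w2) (w2*w2) (w3 - /w3) (w3*w3)) = 0.
Proof. unfold K101, AA. unfold PP. field; repeat split; auto; try nz. Qed.

Lemma zK102 (w1 w2 w3 : R) (H1 : w1 <> 0) (H2 : w2 <> 0) (H3 : w3 <> 0)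
  (N12 : PP ((w1 - /w1)+(w2 - /w2)) ((w1*w1)*(w2*w2)) <> 0)
  (N13 : PP ((w1 - /w1)+(w3 - /w3)) ((w1*w1)*(w3*w3)) <> 0)
  (N23 : PP ((w2 - /w2)+(w3 - /w3)) ((w2*w2)*(w3*w3)) <> 0) :
  K102 (w1 - /w1) (w2 - /w2) (w3 - /w3) (w1*w1) (w2*w2) (w3*w3) (/(w1*w1)) (/(w2*w2)) (/(w3*w3)) (AA (w1 - /w1) (w1*w1) (w2 - /w2) (w2*w2)) (AA (w1 - /w1) (w1*w1) (w3 - /w3) (w3*w3)) (AA (w2 - /w2) (w2*w2) (w3 - /w3) (w3*w3)) = 0.
Proof. unfold K102, AA. unfold PP. field; repeat split; auto; try nz. Qed.

Lemma zK110 (w1 w2 w3 : R) (H1 : w1 <> 0) (H2 : w2 <> 0) (H3 : w3 <> 0)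
  (N12 : PP ((w1 - /w1)+(w2 - /w2)) ((w1*w1)*(w2*w2)) <> 0)
  (N13 : PP ((w1 - /w1)+(w3 - /w3)) ((w1*w1)*(w3*w3)) <> 0)
  (N23 : PP ((w2 - /w2)+(w3 - /w3)) ((w2*w2)*(w3*w3)) <> 0) :
  K110 (w1 - /w1) (w2 - /w2) (w3 - /w3) (w1*w1) (w2*w2) (w3*w3) (/(w1*w1)) (/(w2*w2)) (/(w3*w3)) (AA (w1 - /w1) (w1*w1) (w2 - /w2) (w2*w2)) (AA (w1 - /w1) (w1*w1) (w3 - /w3) (w3*w3)) (AA (w2 - /w2) (w2*w2) (w3 - /w3) (w3*w3)) = 0.
Proof. unfold K110, AA. unfold PP. field; repeat split; auto; try nz. Qed.

Lemma zK111 (w1 w2 w3 : R) (H1 : w1 <> 0) (H2 : w2 <> 0) (H3 : w3 <> 0)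
  (N12 : PP ((w1 - /w1)+(w2 - /w2)) ((w1*w1)*(w2*w2)) <> 0)
  (N13 : PP ((w1 - /w1)+(w3 - /w3)) ((w1*w1)*(w3*w3)) <> 0)
  (N23 : PP ((w2 - /w2)+(w3 - /w3)) ((w2*w2)*(w3*w3)) <> 0) :
  K111 (w1 - /w1) (w2 - /w2) (w3 - /w3) (w1*w1) (w2*w2) (w3*w3) (/(w1*w1)) (/(w2*w2)) (/(w3*w3)) (AA (w1 - /w1) (w1*w1) (w2 - /w2) (w2*w2)) (AA (w1 - /w1) (w1*w1) (w3 - /w3) (w3*w3)) (AA (w2 - /w2) (w2*w2) (w3 - /w3) (w3*w3)) = 0.
Proof. unfold K111, AA. unfold PP. field; repeat split; auto; try nz. Qed.

Lemma zK112 (w1 w2 w3 : R) (H1 : w1 <> 0) (H2 : w2 <> 0) (H3 : w3 <> 0)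
  (N12 : PP ((w1 - /w1)+(w2 - /w2)) ((w1*w1)*(w2*w2)) <> 0)
  (N13 : PP ((w1 - /w1)+(w3 - /w3)) ((w1*w1)*(w3*w3)) <> 0)
  (N23 : PP ((w2 - /w2)+(w3 - /w3)) ((w2*w2)*(w3*w3)) <> 0) :
  K112 (w1 - /w1) (w2 - /w2) (w3 - /w3) (w1*w1) (w2*w2) (w3*w3) (/(w1*w1)) (/(w2*w2)) (/(w3*w3)) (AA (w1 - /w1) (w1*w1) (w2 - /w2) (w2*w2)) (AA (w1 - /w1) (w1*w1) (w3 - /w3) (w3*w3)) (AA (w2 - /w2) (w2*w2) (w3 - /w3) (w3*w3)) = 0.
Proof. unfold K112, AA. unfold PP. field; repeat split; auto; try nz. Qed.

Lemma zK120 (w1 w2 w3 : R) (H1 : w1 <> 0) (H2 : w2 <> 0) (H3 : w3 <> 0)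
  (N12 : PP ((w1 - /w1)+(w2 - /w2)) ((w1*w1)*(w2*w2)) <> 0)
  (N13 : PP ((w1 - /w1)+(w3 - /w3)) ((w1*w1)*(w3*w3)) <> 0)
  (N23 : PP ((w2 - /w2)+(w3 - /w3)) ((w2*w2)*(w3*w3)) <> 0) :
  K120 (w1 - /w1) (w2 - /w2) (w3 - /w3) (w1*w1) (w2*w2) (w3*w3) (/(w1*w1)) (/(w2*w2)) (/(w3*w3)) (AA (w1 - /w1) (w1*w1) (w2 - /w2) (w2*w2)) (AA (w1 - /w1) (w1*w1) (w3 - /w3) (w3*w3)) (AA (w2 - /w2) (w2*w2) (w3 - /w3) (w3*w3)) = 0.
Proof. unfold K120, AA. unfold PP. field; repeat split; auto; try nz. Qed.

Lemma zK121 (w1 w2 w3 : R) (H1 : w1 <> 0) (H2 : w2 <> 0) (H3 : w3 <> 0)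
  (N12 : PP ((w1 - /w1)+(w2 - /w2)) ((w1*w1)*(w2*w2)) <> 0)
  (N13 : PP ((w1 - /w1)+(w3 - /w3)) ((w1*w1)*(w3*w3)) <> 0)
  (N23 : PP ((w2 - /w2)+(w3 - /w3)) ((w2*w2)*(w3*w3)) <> 0) :
  K121 (w1 - /w1) (w2 - /w2) (w3 - /w3) (w1*w1) (w2*w2) (w3*w3) (/(w1*w1)) (/(w2*w2)) (/(w3*w3)) (AA (w1 - /w1) (w1*w1) (w2 - /w2) (w2*w2)) (AA (w1 - /w1) (w1*w1) (w3 - /w3) (w3*w3)) (AA (w2 - /w2) (w2*w2) (w3 - /w3) (w3*w3)) = 0.
Proof. unfold K121, AA. unfold PP. field; repeat split; auto; try nz. Qed.

Lemma zK122 (w1 w2 w3 : R) (H1 : w1 <> 0) (H2 : w2 <> 0) (H3 : w3 <> 0)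
  (N12 : PP ((w1 - /w1)+(w2 - /w2)) ((w1*w1)*(w2*w2)) <> 0)
  (N13 : PP ((w1 - /w1)+(w3 - /w3)) ((w1*w1)*(w3*w3)) <> 0)
  (N23 : PP ((w2 - /w2)+(w3 - /w3)) ((w2*w2)*(w3*w3)) <> 0) :
  K122 (w1 - /w1) (w2 - /w2) (w3 - /w3) (w1*w1) (w2*w2) (w3*w3) (/(w1*w1)) (/(w2*w2)) (/(w3*w3)) (AA (w1 - /w1) (w1*w1) (w2 - /w2) (w2*w2)) (AA (w1 - /w1) (w1*w1) (w3 - /w3) (w3*w3)) (AA (w2 - /w2) (w2*w2) (w3 - /w3) (w3*w3)) = 0.
Proof. unfold K122, AA. unfold PP. field; repeat split; auto; try nz. Qed.

Lemma zK200 (w1 w2 w3 : R) (H1 : w1 <> 0) (H2 : w2 <> 0) (H3 : w3 <> 0)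
  (N12 : PP ((w1 - /w1)+(w2 - /w2)) ((w1*w1)*(w2*w2)) <> 0)
  (N13 : PP ((w1 - /w1)+(w3 - /w3)) ((w1*w1)*(w3*w3)) <> 0)
  (N23 : PP ((w2 - /w2)+(w3 - /w3)) ((w2*w2)*(w3*w3)) <> 0) :
  K200 (w1 - /w1) (w2 - /w2) (w3 - /w3) (w1*w1) (w2*w2) (w3*w3) (/(w1*w1)) (/(w2*w2)) (/(w3*w3)) (AA (w1 - /w1) (w1*w1) (w2 - /w2) (w2*w2)) (AA (w1 - /w1) (w1*w1) (w3 - /w3) (w3*w3)) (AA (w2 - /w2) (w2*w2) (w3 - /w3) (w3*w3)) = 0.
Proof. unfold K200, AA. unfold PP. field; repeat split; auto; try nz. Qed.

Lemma zK201 (w1 w2 w3 : R) (H1 : w1 <> 0) (H2 : w2 <> 0) (H3 : w3 <> 0)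
  (N12 : PP ((w1 - /w1)+(w2 - /w2)) ((w1*w1)*(w2*w2)) <> 0)
  (N13 : PP ((w1 - /w1)+(w3 - /w3)) ((w1*w1)*(w3*w3)) <> 0)
  (N23 : PP ((w2 - /w2)+(w3 - /w3)) ((w2*w2)*(w3*w3)) <> 0) :
  K201 (w1 - /w1) (w2 - /w2) (w3 - /w3) (w1*w1) (w2*w2) (w3*w3) (/(w1*w1)) (/(w2*w2)) (/(w3*w3)) (AA (w1 - /w1) (w1*w1) (w2 - /w2) (w2*w2)) (AA (w1 - /w1) (w1*w1) (w3 - /w3) (w3*w3)) (AA (w2 - /w2) (w2*w2) (w3 - /w3) (w3*w3)) = 0.
Proof. unfold K201, AA. unfold PP. field; repeat split; auto; try nz. Qed.

Lemma zK202 (w1 w2 w3 : R) (H1 : w1 <> 0) (H2 : w2 <> 0) (H3 : w3 <> 0)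
  (N12 : PP ((w1 - /w1)+(w2 - /w2)) ((w1*w1)*(w2*w2)) <> 0)
  (N13 : PP ((w1 - /w1)+(w3 - /w3)) ((w1*w1)*(w3*w3)) <> 0)
  (N23 : PP ((w2 - /w2)+(w3 - /w3)) ((w2*w2)*(w3*w3)) <> 0) :
  K202 (w1 - /w1) (w2 - /w2) (w3 - /w3) (w1*w1) (w2*w2) (w3*w3) (/(w1*w1)) (/(w2*w2)) (/(w3*w3)) (AA (w1 - /w1) (w1*w1) (w2 - /w2) (w2*w2)) (AA (w1 - /w1) (w1*w1) (w3 - /w3) (w3*w3)) (AA (w2 - /w2) (w2*w2) (w3 - /w3) (w3*w3)) = 0.
Proof. unfold K202, AA. unfold PP. field; repeat split; auto; try nz. Qed.

Lemma zK210 (w1 w2 w3 : R) (H1 : w1 <> 0) (H2 : w2 <> 0) (H3 : w3 <> 0)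
  (N12 : PP ((w1 - /w1)+(w2 - /w2)) ((w1*w1)*(w2*w2)) <> 0)
  (N13 : PP ((w1 - /w1)+(w3 - /w3)) ((w1*w1)*(w3*w3)) <> 0)
  (N23 : PP ((w2 - /w2)+(w3 - /w3)) ((w2*w2)*(w3*w3)) <> 0) :
  K210 (w1 - /w1) (w2 - /w2) (w3 - /w3) (w1*w1) (w2*w2) (w3*w3) (/(w1*w1)) (/(w2*w2)) (/(w3*w3)) (AA (w1 - /w1) (w1*w1) (w2 - /w2) (w2*w2)) (AA (w1 - /w1) (w1*w1) (w3 - /w3) (w3*w3)) (AA (w2 - /w2) (w2*w2) (w3 - /w3) (w3*w3)) = 0.
Proof. unfold K210, AA. unfold PP. field; repeat split; auto; try nz. Qed.

Lemma zK211 (w1 w2 w3 : R) (H1 : w1 <> 0) (H2 : w2 <> 0) (H3 : w3 <> 0)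
  (N12 : PP ((w1 - /w1)+(w2 - /w2)) ((w1*w1)*(w2*w2)) <> 0)
  (N13 : PP ((w1 - /w1)+(w3 - /w3)) ((w1*w1)*(w3*w3)) <> 0)
  (N23 : PP ((w2 - /w2)+(w3 - /w3)) ((w2*w2)*(w3*w3)) <> 0) :
  K211 (w1 - /w1) (w2 - /w2) (w3 - /w3) (w1*w1) (w2*w2) (w3*w3) (/(w1*w1)) (/(w2*w2)) (/(w3*w3)) (AA (w1 - /w1) (w1*w1) (w2 - /w2) (w2*w2)) (AA (w1 - /w1) (w1*w1) (w3 - /w3) (w3*w3)) (AA (w2 - /w2) (w2*w2) (w3 - /w3) (w3*w3)) = 0.
Proof. unfold K211, AA. unfold PP. field; repeat split; auto; try nz. Qed.

Lemma zK212 (w1 w2 w3 : R) (H1 : w1 <> 0) (H2 : w2 <> 0) (H3 : w3 <> 0)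
  (N12 : PP ((w1 - /w1)+(w2 - /w2)) ((w1*w1)*(w2*w2)) <> 0)
  (N13 : PP ((w1 - /w1)+(w3 - /w3)) ((w1*w1)*(w3*w3)) <> 0)
  (N23 : PP ((w2 - /w2)+(w3 - /w3)) ((w2*w2)*(w3*w3)) <> 0) :
  K212 (w1 - /w1) (w2 - /w2) (w3 - /w3) (w1*w1) (w2*w2) (w3*w3) (/(w1*w1)) (/(w2*w2)) (/(w3*w3)) (AA (w1 - /w1) (w1*w1) (w2 - /w2) (w2*w2)) (AA (w1 - /w1) (w1*w1) (w3 - /w3) (w3*w3)) (AA (w2 - /w2) (w2*w2) (w3 - /w3) (w3*w3)) = 0.
Proof. unfold K212, AA. unfold PP. field; repeat split; auto; try nz. Qed.

Lemma zK220 (w1 w2 w3 : R) (H1 : w1 <> 0) (H2 : w2 <> 0) (H3 : w3 <> 0)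
  (N12 : PP ((w1 - /w1)+(w2 - /w2)) ((w1*w1)*(w2*w2)) <> 0)
  (N13 : PP ((w1 - /w1)+(w3 - /w3)) ((w1*w1)*(w3*w3)) <> 0)
  (N23 : PP ((w2 - /w2)+(w3 - /w3)) ((w2*w2)*(w3*w3)) <> 0) :
  K220 (w1 - /w1) (w2 - /w2) (w3 - /w3) (w1*w1) (w2*w2) (w3*w3) (/(w1*w1)) (/(w2*w2)) (/(w3*w3)) (AA (w1 - /w1) (w1*w1) (w2 - /w2) (w2*w2)) (AA (w1 - /w1) (w1*w1) (w3 - /w3) (w3*w3)) (AA (w2 - /w2) (w2*w2) (w3 - /w3) (w3*w3)) = 0.
Proof. unfold K220, AA. unfold PP. field; repeat split; auto; try nz. Qed.

Lemma zK221 (w1 w2 w3 : R) (H1 : w1 <> 0) (H2 : w2 <> 0) (H3 : w3 <> 0)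
  (N12 : PP ((w1 - /w1)+(w2 - /w2)) ((w1*w1)*(w2*w2)) <> 0)
  (N13 : PP ((w1 - /w1)+(w3 - /w3)) ((w1*w1)*(w3*w3)) <> 0)
  (N23 : PP ((w2 - /w2)+(w3 - /w3)) ((w2*w2)*(w3*w3)) <> 0) :
  K221 (w1 - /w1) (w2 - /w2) (w3 - /w3) (w1*w1) (w2*w2) (w3*w3) (/(w1*w1)) (/(w2*w2)) (/(w3*w3)) (AA (w1 - /w1) (w1*w1) (w2 - /w2) (w2*w2)) (AA (w1 - /w1) (w1*w1) (w3 - /w3) (w3*w3)) (AA (w2 - /w2) (w2*w2) (w3 - /w3) (w3*w3)) = 0.
Proof. unfold K221, AA. unfold PP. field; repeat split; auto; try nz. Qed.

Lemma zK222 (w1 w2 w3 : R) (H1 : w1 <> 0) (H2 : w2 <> 0) (H3 : w3 <> 0)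
  (N12 : PP ((w1 - /w1)+(w2 - /w2)) ((w1*w1)*(w2*w2)) <> 0)
  (N13 : PP ((w1 - /w1)+(w3 - /w3)) ((w1*w1)*(w3*w3)) <> 0)
  (N23 : PP ((w2 - /w2)+(w3 - /w3)) ((w2*w2)*(w3*w3)) <> 0) :
  K222 (w1 - /w1) (w2 - /w2) (w3 - /w3) (w1*w1) (w2*w2) (w3*w3) (/(w1*w1)) (/(w2*w2)) (/(w3*w3)) (AA (w1 - /w1) (w1*w1) (w2 - /w2) (w2*w2)) (AA (w1 - /w1) (w1*w1) (w3 - /w3) (w3*w3)) (AA (w2 - /w2) (w2*w2) (w3 - /w3) (w3*w3)) = 0.
Proof. unfold K222, AA. unfold PP. field; repeat split; auto; try nz. Qed.

Lemma KSUM0 (w1 w2 w3 : R) (H1 : w1 <> 0) (H2 : w2 <> 0) (H3 : w3 <> 0)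
  (N12 : PP ((w1 - /w1)+(w2 - /w2)) ((w1*w1)*(w2*w2)) <> 0)
  (N13 : PP ((w1 - /w1)+(w3 - /w3)) ((w1*w1)*(w3*w3)) <> 0)
  (N23 : PP ((w2 - /w2)+(w3 - /w3)) ((w2*w2)*(w3*w3)) <> 0) (E1 E2 E3 : R) : KSUM (w1 - /w1) (w2 - /w2) (w3 - /w3) (w1*w1) (w2*w2) (w3*w3) (/(w1*w1)) (/(w2*w2)) (/(w3*w3)) (AA (w1 - /w1) (w1*w1) (w2 - /w2) (w2*w2)) (AA (w1 - /w1) (w1*w1) (w3 - /w3) (w3*w3)) (AA (w2 - /w2) (w2*w2) (w3 - /w3) (w3*w3)) E1 E2 E3 = 0.
Proof. unfold KSUM. rewrite (zK000 w1 w2 w3 H1 H2 H3 N12 N13 N23), (zK001 w1 w2 w3 H1 H2 H3 N12 N13 N23), (zK002 w1 w2 w3 H1 H2 H3 N12 N13 N23), (zK010 w1 w2 w3 H1 H2 H3 N12 N13 N23), (zK011 w1 w2 w3 H1 H2 H3 N12 N13 N23), (zK012 w1 w2 w3 H1 H2 H3 N12 N13 N23), (zK020 w1 w2 w3 H1 H2 H3 N12 N13 N23), (zK021 w1 w2 w3 H1 H2 H3 N12 N13 N23), (zK022 w1 w2 w3 H1 H2 H3 N12 N13 N23), (zK100 w1 w2 w3 H1 H2 H3 N12 N13 N23), (zK101 w1 w2 w3 H1 H2 H3 N12 N13 N23), (zK102 w1 w2 w3 H1 H2 H3 N12 N13 N23), (zK110 w1 w2 w3 H1 H2 H3 N12 N13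 N23), (zK111 w1 w2 w3 H1 H2 H3 N12 N13 N23), (zK112 w1 w2 w3 H1 H2 H3 N12 N13 N23), (zK120 w1 w2 w3 H1 H2 H3 N12 N13 N23), (zK121 w1 w2 w3 H1 H2 H3 N12 N13 N23), (zK122 w1 w2 w3 H1 H2 H3 N12 N13 N23), (zK200 w1 w2 w3 H1 H2 H3 N12 N13 N23), (zK201 w1 w2 w3 H1 H2 H3 N12 N13 N23), (zK202 w1 w2 w3 H1 H2 H3 N12 N13 N23), (zK210 w1 w2 w3 H1 H2 H3 N12 N13 N23), (zK211 w1 w2 w3 H1 H2 H3 N12 N13 N23), (zK212 w1 w2 w3 H1 H2 H3 N12 N13 N23), (zK220 w1 w2 w3 H1 H2 H3 N12 N13 N23), (zK221 w1 w2 w3 H1 H2 H3 N12 N13 N23), (zK222 w1 w2 w3 H1 H2 H3 N12 N13 N23). ring. Qed.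

Lemma get_w (b u : R) : 0 < u -> b^2 = u + /u - 2 ->
  exists w, w <> 0 /\ b = w - /w /\ u = w*w.
Proof.
  intros Hu Hb.
  assert (Hs : 0 < sqrt u) by (apply sqrt_lt_R0; auto).
  assert (Hss : sqrt u * sqrt u = u) by (apply sqrt_sqrt; lra).
  set (s := sqrt u) in *.
  assert (Hsq : (b - (s - /s)) * (b + (s - /s)) = 0).
  { rewrite <- Hss in Hb. field_simplify in Hb; [|lra].
    field_simplify; [|lra]. rewrite Hb. field. lra. }
  destruct (Rmult_integral _ _ Hsq) as [E|E].
  - exists s. split; [lra|]. split; [lra| auto].
  - exists (-s). split; [lra|]. split.
    + replace (-s - / - s) with (-(s - /s)) by (field; lra). lra.
    + rewrite <- Hss; ring.
Qed.

Lemma PPe eps p : Ppoly eps p = PP (vbeta p) (exp (valpha p * eps)).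
Proof. unfold Ppoly, PP. rewrite exp_Ropp. reflexivity. Qed.
Lemma e_add eps p q : exp (valpha (vadd p q) * eps) = exp (valpha p * eps) * exp (valpha q * eps).
Proof. unfold vadd, valpha at 1; simpl. rewrite <- exp_plus. f_equal. unfold valpha; ring. Qed.
Lemma e_sub eps p q : exp (valpha (vsub p q) * eps) = exp (valpha p * eps) / exp (valpha q * eps).
Proof. unfold vsub, valpha at 1; simpl. unfold Rdiv. rewrite <- exp_Ropp, <- exp_plus. f_equal. unfold valpha; ring. Qed.
Lemma b_add p q : vbeta (vadd p q) = vbeta p + vbeta q.
Proof. reflexivity. Qed.
Lemma b_sub p q : vbeta (vsub p q) = vbeta p - vbeta q.
Proof. reflexivity. Qed.

Lemma f3_FF eps p1 p2 p3 x s :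
  f3 eps p1 p2 p3 x s = FF (vbeta p1) (vbeta p2) (vbeta p3)
    (exp (valpha p1 * eps)) (exp (valpha p2 * eps)) (exp (valpha p3 * eps))
    (exp (theta p1 x s)) (exp (theta p2 x s)) (exp (theta p3 x s)).
Proof.
  unfold f3, FF, Acoef, AA. rewrite !PPe, !e_add, !e_sub, !b_add, !b_sub, !exp_plus.
  reflexivity.
Qed.

Lemma dFF p1 p2 p3 u1 u2 u3 x s :
  derivable_pt_lim (fun s' => FF (vbeta p1) (vbeta p2) (vbeta p3) u1 u2 u3
    (exp (theta p1 x s')) (exp (theta p2 x s')) (exp (theta p3 x s'))) s
   (FT (vbeta p1) (vbeta p2) (vbeta p3) u1 u2 u3
    (exp (theta p1 x s)) (exp (theta p2 x s)) (exp (theta p3 x s))).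
Proof.
  apply is_derive_Reals. unfold FF, FT, theta. auto_derive; [auto|]. ring.
Qed.
Lemma dFT p1 p2 p3 u1 u2 u3 x s :
  derivable_pt_lim (fun s' => FT (vbeta p1) (vbeta p2) (vbeta p3) u1 u2 u3
    (exp (theta p1 x s')) (exp (theta p2 x s')) (exp (theta p3 x s'))) s
   (FTT (vbeta p1) (vbeta p2) (vbeta p3) u1 u2 u3
    (exp (theta p1 x s)) (exp (theta p2 x s)) (exp (theta p3 x s))).
Proof.
  apply is_derive_Reals. unfold FTT, FT, theta. auto_derive; [auto|]. ring.
Qed.

Lemma th_p p eps x t : x <> 0 -> 1 - eps * x <> 0 ->
  exp (theta p (x / (1 - eps * x)) t) = exp (theta p x t) * exp (valpha p * eps).
Proof. intros. rewrite <- exp_plus. f_equal. unfold theta. field. auto. Qed.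
Lemma th_m p eps x t : x <> 0 -> 1 + eps * x <> 0 ->
  exp (theta p (x / (1 + eps * x)) t) = exp (theta p x t) / exp (valpha p * eps).
Proof. intros. unfold Rdiv at 2. rewrite <- exp_Ropp, <- exp_plus. f_equal. unfold theta. field. auto. Qed.

Theorem mainTheorem4 (eps : R) (p1 p2 p3 : vec)
  (h1 : (vbeta p1)^2 = exp (valpha p1 * eps) + exp (- (valpha p1 * eps)) - 2)
  (h2 : (vbeta p2)^2 = exp (valpha p2 * eps) + exp (- (valpha p2 * eps)) - 2)
  (h3 : (vbeta p3)^2 = exp (valpha p3 * eps) + exp (- (valpha p3 * eps)) - 2)
  (h12 : Ppoly eps (vadd p1 p2) <> 0)
  (h13 : Ppoly eps (vadd p1 p3) <> 0)
  (h23 : Ppoly eps (vadd p2 p3) <> 0) :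
  forall (x : R), x <> 0 -> 1 - eps * x <> 0 -> 1 + eps * x <> 0 ->
  forall (ft ftt : R -> R),
    (forall s, derivable_pt_lim (fun s' => f3 eps p1 p2 p3 x s') s (ft s)) ->
    (forall s, derivable_pt_lim ft s (ftt s)) ->
  forall t : R, qToda_bilinear eps (f3 eps p1 p2 p3) ft ftt x t = 0.
Proof.
  intros x Hx Hm Hp ft ftt Hd Hdd t.
  assert (Eft : ft = fun s => FT (vbeta p1) (vbeta p2) (vbeta p3)
    (exp (valpha p1 * eps)) (exp (valpha p2 * eps)) (exp (valpha p3 * eps))
    (exp (theta p1 x s)) (exp (theta p2 x s)) (exp (theta p3 x s))).
  { apply functional_extensionality; intro s.
    eapply uniqueness_limite; [apply Hd|].
    eapply derivable_pt_lim_ext; [|apply dFF].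
    intro y; simpl. symmetry; apply f3_FF. }
  assert (Eftt : ftt t = FTT (vbeta p1) (vbeta p2) (vbeta p3)
    (exp (valpha p1 * eps)) (exp (valpha p2 * eps)) (exp (valpha p3 * eps))
    (exp (theta p1 x t)) (exp (theta p2 x t)) (exp (theta p3 x t))).
  { eapply uniqueness_limite; [apply Hdd|]. rewrite Eft. apply dFT. }
  unfold qToda_bilinear, hirota_Dt2, qshift_plus, qshift_minus.
  rewrite Eftt, Eft. rewrite !f3_FF.
  rewrite !th_p, !th_m by auto.
  rewrite exp_Ropp in h1, h2, h3.
  rewrite !PPe, !e_add, !b_add in h12, h13, h23.
  destruct (get_w _ _ (exp_pos _) h1) as [w1 [W1 [B1 U1]]].
  destruct (get_w _ _ (exp_pos _) h2) as [w2 [W2 [B2 U2]]].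
  destruct (get_w _ _ (exp_pos _) h3) as [w3 [W3 [B3 U3]]].
  rewrite B1, B2, B3, U1, U2, U3 in *.
  set (E1 := exp (theta p1 x t)). set (E2 := exp (theta p2 x t)). set (E3 := exp (theta p3 x t)).
  exact (eq_trans
    (G1 (w1 - /w1) (w2 - /w2) (w3 - /w3) (w1*w1) (w2*w2) (w3*w3) (/(w1*w1)) (/(w2*w2)) (/(w3*w3))
        (AA (w1 - /w1) (w1*w1) (w2 - /w2) (w2*w2)) (AA (w1 - /w1) (w1*w1) (w3 - /w3) (w3*w3))
        (AA (w2 - /w2) (w2*w2) (w3 - /w3) (w3*w3)) E1 E2 E3)
    (KSUM0 w1 w2 w3 W1 W2 W3 h12 h13 h23 E1 E2 E3)).
Qed.
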